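(* Let $\mathcal{F}\subseteq(\mathcal{X}\to\{0,1\})$. For every $\varepsilon\in[0,1]$, $$\big|\mathsf{RDim}_\varepsilon(\mathcal{F})-\log N_{\mathsf{frac}}(\mathcal{F};\varepsilon)\big|\le2.$$
   Context: Fractional covering number of $\mathcal{F}$ at scale $\Delta$: $N_{\mathsf{frac}}(\mathcal{F};\Delta)=\inf_{p\in\Delta(\mathcal{F})}\sup_{\nu\in\Delta(\mathcal{X}),f^\star\in\mathcal{F}}\frac{1}{p(\{f:\mathbb{P}_{x\sim\nu}(f(x)\ne f^\star(x))\le\Delta\})}$. A distribution $\mathscr{H}$ over finite subsets of $\mathcal{F}$ is an $\varepsilon$-probabilistic representation of $\mathcal{F}$ if for every $\nu\in\Delta(\mathcal{X})$ and $f\in\mathcal{F}$, with probability at least $3/4$ over $\mathcal{H}\sim\mathscr{H}$ there is $h\in\mathcal{H}$ with $\mathbb{P}_{x\sim\nu}(h(x)\ne f(x))\le\varepsilon$. Its size is $\sup_{\mathcal{H}\in\mathrm{supp}(\mathscr{H})}\log|\mathcal{H}|$, and $\mathsf{RDim}_\varepsilon(\mathcal{F})$ is the infimum of sizes over all $\varepsilon$-probabilistic representations. Logarithms are natural. *)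

(* Defs.v *)
From mathcomp Require Import all_boot all_order all_algebra.
From mathcomp Require Import all_classical all_reals all_analysis.
Set Implicit Arguments. Unset Strict Implicit. Unset Printing Implicit Defensive.
Import Order.TTheory GRing.Theory Num.Theory.
Local Open Scope classical_set_scope.
Local Open Scope ring_scope.

Section Defs.
Variable R : realType.

Definition is_dist (T : choiceType) (w : T -> R) : Prop :=
  (forall t, 0 <= w t) /\ (\esum_(t in [set: T]) (w t)%:E = 1)%E.

Definition prob (T : choiceType) (w : T -> R) (A : set T) : \bar R :=
  \esum_(t in A) (w t)%:E.

Definition dist_on (X : Type) (F : set (X -> bool)) (p : (X -> bool) -> R) :=
  is_dist p /\ (forall f, 0 < p f -> F f).

Definition disagree (X : Type) (nu : {classic X} -> R) (h f : X -> bool)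
  : \bar R := prob nu [set x : {classic X} | h x != f x].

Definition einv (q : \bar R) : \bar R :=
  match q with
  | r%:E => if r == 0 then +oo%E else (r^-1)%:E
  | +oo%E => 0%E
  | -oo%E => -oo%E
  end.

Definition lnE (q : \bar R) : \bar R :=
  match q with
  | r%:E => (ln r)%:E
  | +oo%E => +oo%E
  | -oo%E => -oo%E
  end.

Definition lncard (n : nat) : \bar R :=
  if n == 0%N then -oo%E else (ln (n%:R : R))%:E.

Definition Nfrac (X : Type) (F : set (X -> bool)) (Delta : R) : \bar R :=
  ereal_inf [set ereal_sup
      [set y | exists (nu : {classic X} -> R) (fs : X -> bool),
         [/\ is_dist nu, F fs &
             y = einv (prob p [set f | (disagree nu f fs <= Delta%:E)%E])]]
    | p in dist_on F].

Definition prob_rep (X : Type) (F : set (X -> bool)) (eps : R)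
  (HH : set (X -> bool) -> R) : Prop :=
  is_dist HH /\
  (forall H, 0 < HH H -> finite_set H /\ H `<=` F) /\
  (forall (nu : {classic X} -> R) (f : X -> bool), is_dist nu -> F f ->
     ((3 / 4 : R)%:E <=
        prob HH [set H | exists2 h, H h & (disagree nu h f <= eps%:E)%E])%E).

Definition rep_size (X : Type) (HH : set (X -> bool) -> R) : \bar R :=
  ereal_sup [set lncard n | n in
    [set n : nat | exists H : set (X -> bool), 0 < HH H /\ (H #= `I_n)%card]].

Definition RDim (X : Type) (F : set (X -> bool)) (eps : R) : \bar R :=
  ereal_inf [set rep_size HH | HH in prob_rep F eps].

End Defs.

(* Main.v *)
Require Import Defs.
From mathcomp Require Import all_boot all_order all_algebra.
From mathcomp Require Import all_classical all_reals all_analysis.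
From mathcomp Require Import ring lra.
From mathcomp Require Import finmap.
Set Implicit Arguments. Unset Strict Implicit. Unset Printing Implicit Defensive.
Import Order.TTheory GRing.Theory Num.Theory.
Local Open Scope classical_set_scope.
Local Open Scope ring_scope.

Section S.
Variable R : realType.

Lemma esum_point (T : choiceType) (A : set T) (y : T) (c : R) : 0 <= c ->
  (\esum_(x in A) (if y == x then c else 0)%:E = (if y \in A then c else 0)%:E)%E.
Proof.
move=> c0.
rewrite (eq_esum (b := fun x => if x \in [set y] then c%:E else 0%E)); last first.
  move=> x _; rewrite in_set1 eq_sym /=.
  by case: eqP.
rewrite -(esum_mkcondr _ _ (fun=> c%:E)); case: ifPn => [/set_mem Ay|/negP nAy].
  rewrite (_ : A `&` [set y] = [set y]) ?esum_set1 ?lee_fin //.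
  by apply/seteqP; split=> x /=; [case|move=> ->].
rewrite (_ : A `&` [set y] = set0) ?esum_set0 //.
by apply/seteqP; split => x //= [Ax xy]; apply: nAy; apply: mem_set; rewrite -xy.
Qed.

Lemma esum_seq (I : choiceType) (T : choiceType) (L : seq I) (phi : I -> T) (nu : I -> R) (A : set T) :
  (forall i, i \in L -> 0 <= nu i) ->
  (\esum_(x in A) (\sum_(i <- L | phi i == x) nu i)%:E = (\sum_(i <- L | phi i \in A) nu i)%:E)%E.
Proof.
move=> nu0.
rewrite (eq_esum (b := fun x => \sum_(i <- L | i \in L) (if phi i == x then nu i else 0)%:E)); last first.
  by move=> x _; rewrite -sumEFin -big_seq big_mkcond; apply: eq_bigr => i _; case: eqP.
rewrite (@esum_sum _ _ _ A L (fun i => i \in L) (fun x i => (if phi i == x then nu i else 0)%:E)); last first.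
  by move=> x i _ iL; case: eqP; rewrite ?lee_fin ?nu0.
rewrite [in RHS]big_mkcond -sumEFin big_seq /=; apply: eq_bigr => i iL.
by rewrite esum_point ?nu0 //; case: ifP.
Qed.

Lemma LB (T : choiceType) (w : T -> R) (A : set T) (s : seq T) :
  (forall t, 0 <= w t) -> uniq s -> (forall t, t \in s -> A t) ->
  ((\sum_(t <- s) w t)%:E <= \esum_(t in A) (w t)%:E)%E.
Proof.
move=> w0 us sA; apply: esum_ge; exists [set` s]; first by split => // t /= /sA.
by rewrite -sumEFin fsbig_seq.
Qed.

Lemma trunc (T : choiceType) (w : T -> R) : is_dist w -> forall eta, 0 < eta ->
 exists s : seq T, [/\ uniq s, (forall t, t \in s -> 0 < w t),
   \sum_(t <- s) w t <= 1 &
   forall A, (prob w A <= (\sum_(t <- s | t \in A) w t + eta)%:E)%E].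
Proof.
move=> [w0 w1] eta eta0.
have : ((1 - eta)%:E < \esum_(t in [set: T]) (w t)%:E)%E.
  by rewrite w1 lte_fin; lra.
case/ereal_sup_gt => _ [X [finX _] <-] lt1.
set s := [seq t <- enum_fset (fset_set X) | 0 < w t].
have us : uniq s by rewrite filter_uniq // fset_uniq.
have sX : \sum_(t <- s) w t = \sum_(t <- fset_set X) w t.
  rewrite big_filter [RHS](bigID (fun t => 0 < w t)) /= [X in _ + X]big1 ?addr0 //.
  by move=> t; rewrite lt_neqAle w0 andbT negbK => /eqP <-.
have hs : 1 - eta < \sum_(t <- s) w t.
  by move: lt1; rewrite fsbig_finite // sumEFin lte_fin sX.
have le1 : \sum_(t <- s) w t <= 1.
  by rewrite -lee_fin -w1; apply: LB.
exists s; split => // [t|A]; first by rewrite mem_filter => /andP[].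
rewrite /prob.
have := esumID A setT (fun t => (w t)%:E) (fun t _ => w0 t).
rewrite setTI w1.
have h2 := @LB T w (~` A) [seq t <- s | t \notin A] w0 (filter_uniq _ us).
have h3 : (0 <= \esum_(t in A) (w t)%:E)%E by apply: esum_ge0 => t _; rewrite lee_fin.
move: h2 h3.
have -> : setT `&` ~` A = ~` A by rewrite setTI.
case: (\esum_(t in A) (w t)%:E)%E => [ra| |]; case: (\esum_(t in ~` A) (w t)%:E)%E => [rb| |] //=.
move=> h2 _ /[dup] e [] e'; rewrite lee_fin; move: h2.
rewrite big_filter lee_fin.
move=> h2.
have hh : \sum_(t <- s) w t = \sum_(t <- s | t \in A) w t + \sum_(t <- s | t \notin A) w t.
  by rewrite (bigID (fun t => t \in A)).
have hb : \sum_(t <- s | t \notin A) w t <= rb.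
  by apply: h2 => t; rewrite mem_filter => /andP[nA _] At; move/negP: nA; apply; exact: mem_set.
clear e lt1 w1; lra.
Qed.

Definition seqd (I T : choiceType) (L : seq I) (phi : I -> T) (nu : I -> R) (x : T) : R :=
  \sum_(i <- L | phi i == x) nu i.

Lemma prob_seqd (I T : choiceType) (L : seq I) (phi : I -> T) (nu : I -> R) (A : set T) :
  (forall i, i \in L -> 0 <= nu i) ->
  prob (seqd L phi nu) A = (\sum_(i <- L | phi i \in A) nu i)%:E.
Proof. exact: esum_seq. Qed.

Lemma seqd_ge0 (I T : choiceType) (L : seq I) (phi : I -> T) (nu : I -> R) x :
  (forall i, i \in L -> 0 <= nu i) -> 0 <= seqd L phi nu x.
Proof. by move=> nu0; rewrite /seqd big_seq_cond; apply: sumr_ge0 => i /andP[/nu0]. Qed.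

Lemma is_dist_seqd (I T : choiceType) (L : seq I) (phi : I -> T) (nu : I -> R) :
  (forall i, i \in L -> 0 <= nu i) -> \sum_(i <- L) nu i = 1 ->
  is_dist (seqd L phi nu).
Proof.
move=> nu0 s1; split => [x|]; first exact: seqd_ge0.
have := prob_seqd phi setT nu0; rewrite /prob => ->.
by rewrite (eq_bigl xpredT) ?s1 // => i /=; rewrite in_setT.
Qed.

Lemma seqd_pos (I T : choiceType) (L : seq I) (phi : I -> T) (nu : I -> R) x :
  0 < seqd L phi nu x -> exists2 i, i \in L & phi i = x.
Proof.
move=> h; case: (pselect (exists2 i, i \in L & phi i = x)) => // hn.
move: h; rewrite /seqd big1_seq ?ltxx //.
by move=> i /andP[/eqP e iL]; exfalso; apply: hn; exists i.
Qed.

Lemma sum_fset_const (T : choiceType) (A : {fset T}) (P : pred T) (c : R) :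
  0 <= c -> \sum_(i <- A | P i) c <= c * (#|` A|)%:R.
Proof.
move=> c0; rewrite card_fset_sum1 natr_sum mulr_sumr big_mkcond /=.
by apply: ler_sum => i _; case: ifP; rewrite ?mulr1.
Qed.

Lemma lncard_le n (s : R) : (lncard R n <= s%:E)%E -> (0 < n)%N -> n%:R <= expR s.
Proof.
rewrite /lncard; case: n => // n; rewrite lee_fin => h _.
rewrite -[X in X <= _]lnK ?ler_expR // posrE ltr0n //.
Qed.

Lemma K1 (X : Type) (x0 : X) (F : set (X -> bool)) (eps : R) (f0 : X -> bool)
  (HH : set (X -> bool) -> R) (s : R) : F f0 ->
  prob_rep F eps HH -> (rep_size HH <= s%:E)%E -> (Nfrac F eps <= (2 * expR s)%:E)%E.
Proof.
move=> Ff0 [dH [supH repH]] hs.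
have q14 : (0:R) < 1/4 by lra.
have [Hs [uHs posHs le1 trH]] := trunc dH q14.
pose nH (H : set (X -> bool)) := #|` fset_set H|.
have nHle : forall H, H \in Hs -> (0 < nH H)%N -> (nH H)%:R <= expR s.
  move=> H HHs n0; have [fin _] := supH H (posHs H HHs).
  case: (fin) => n Hn.
  have e : nH H = n by exact: card_fset_set.
  apply: lncard_le => //; apply: le_trans hs; apply: ereal_sup_ubound.
  by exists (nH H) => //; exists H; split; [exact: posHs | rewrite e].
pose c (H : set (X -> bool)) := HH H / (nH H)%:R.
pose L := flatten [seq [seq (g, c H) | g <- enum_fset (fset_set H)] | H <- Hs].
have c0 : forall H, H \in Hs -> 0 <= c H.
  by move=> H HHs; rewrite /c divr_ge0 // ltW // posHs.
have L0 : forall q, q \in L -> 0 <= q.2.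
  by move=> q /flattenP [l /mapP [H HHs ->] /mapP [g _ ->]] /=; exact: c0.
have sumL : forall P : pred (X -> bool),
    \sum_(q <- L | P q.1) q.2 = \sum_(H <- Hs) \sum_(g <- fset_set H | P g) c H.
  by move=> P; rewrite big_flatten /= big_map; apply: eq_bigr => H _; rewrite big_map.
pose Z := \sum_(q <- L) q.2.
have Zle1 : Z <= 1.
  have -> : Z = \sum_(H <- Hs) \sum_(g <- fset_set H) c H.
    by rewrite /Z big_flatten big_map; apply: eq_bigr => H _; rewrite big_map.
  apply: le_trans le1; rewrite [X in _ <= X]big_seq big_seq; apply: ler_sum => H HHs.
  apply: le_trans (sum_fset_const _ _ (c0 H HHs)) _.
  rewrite /c; case: (posnP (nH H)) => [e|n0]; first by rewrite e invr0 mulr0 mul0r ltW ?posHs.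
  by rewrite divfK // pnatr_eq0 -lt0n.
have ball_lb : forall nu fs, is_dist nu -> F fs ->
    expR (- s) / 2 <= \sum_(q <- L | q.1 \in [set f | (disagree nu f fs <= eps%:E)%E]) q.2.
  move=> nu fs dnu Ffs.
  set B := [set f | _].
  set G := [set H : set (X -> bool) | exists2 h, H h & (disagree nu h fs <= eps%:E)%E].
  have h1 := repH nu fs dnu Ffs.
  have h2 := trH G.
  have hG : 1/2 <= \sum_(H <- Hs | H \in G) HH H.
    have := le_trans h1 h2; rewrite lee_fin; lra.
  rewrite sumL.
  apply: (@le_trans _ _ (expR (- s) * \sum_(H <- Hs | H \in G) HH H)).
    by have := ler_wpM2l (expR_ge0 (-s)) hG; rewrite mul1r.
  rewrite mulr_sumr big_mkcond [X in X <= _]big_seq [X in _ <= X]big_seq /=.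
  apply: ler_sum => H HHs.
  case: ifPn => HG; last by apply: sumr_ge0 => g _; exact: c0.
  have [h Hh hb] := set_mem HG.
  have [finH _] := supH H (posHs H HHs).
  have hfs : h \in fset_set H by rewrite in_fset_set //; apply: mem_set.
  rewrite (big_rem h) //= ifT; last by apply: mem_set.
  have n0 : (0 < nH H)%N.
    by rewrite /nH cardfs_gt0; apply/eqP => e; rewrite e in hfs.
  have nle := nHle H HHs n0.
  rewrite -[X in X <= _]addr0; apply: lerD; last by apply: sumr_ge0 => g _; exact: c0.
  rewrite /c expRN mulrC; apply: ler_wpM2l; first exact: ltW (posHs H HHs).
  by rewrite lef_pV2 // posrE ?expR_gt0 ?ltr0n.
pose nu0 := seqd [:: (x0 : {classic X})] id (fun _ => (1:R)).
have dnu0 : is_dist nu0 by apply: is_dist_seqd => //; rewrite big_seq1.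
have Zpos : 0 < Z.
  have hb := ball_lb nu0 f0 dnu0 Ff0.
  have e0 : 0 < expR (- s) / 2 by rewrite divr_gt0 ?expR_gt0.
  apply: (lt_le_trans e0 (le_trans hb _)).
  rewrite /Z [X in _ <= X]big_mkcond [X in X <= _]big_mkcond /= big_seq [X in _ <= X]big_seq.
  by apply: ler_sum => q qL; case: ifP => // _; exact: L0.
pose p := seqd L fst (fun q => q.2 / Z).
have w0 : forall q, q \in L -> 0 <= q.2 / Z by move=> q qL; rewrite divr_ge0 ?L0 // ltW.
have dp : dist_on F p.
  split.
    by apply: is_dist_seqd => //; rewrite -mulr_suml divff // gt_eqF.
  move=> f /seqd_pos [q /flattenP [l /mapP [H HHs ->] /mapP [g gH ->]] /= <-].
  have [finH HF] := supH H (posHs H HHs).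
  by apply: HF; move: gH; rewrite in_fset_set // => /set_mem.
apply: (@le_trans _ _ (ereal_sup [set y | exists (nu : {classic X} -> R) (fs : X -> bool),
         [/\ is_dist nu, F fs &
             y = einv (prob p [set f | (disagree nu f fs <= eps%:E)%E])]])).
  by apply: ereal_inf_lbound; exists p.
apply: ge_ereal_sup => y [nu [fs [dnu Ffs ->]]].
rewrite prob_seqd // -mulr_suml.
set S := \sum_(q <- L | _) q.2.
have hb := ball_lb nu fs dnu Ffs; rewrite -/S in hb.
have e0 : 0 < expR (- s) / 2 by rewrite divr_gt0 ?expR_gt0.
have SZ : S <= S / Z.
  by rewrite ler_pdivlMr //; have := lt_le_trans e0 hb; nra.
have rpos : 0 < S / Z by apply: lt_le_trans SZ; apply: lt_le_trans hb.
rewrite /einv (gt_eqF rpos) lee_fin.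
have -> : 2 * expR s = (expR (- s) / 2)^-1 by rewrite invfM invrK expRN invrK mulrC.
by rewrite lef_pV2 ?posrE // (le_trans hb SZ).
Qed.

Lemma prob_ge0 (T : choiceType) (w : T -> R) A : is_dist w -> (0 <= prob w A)%E.
Proof. by move=> [w0 _]; apply: esum_ge0 => t _; rewrite lee_fin. Qed.

Lemma prob_le1 (T : choiceType) (w : T -> R) A : is_dist w -> (prob w A <= 1)%E.
Proof.
move=> [w0 w1]; rewrite -w1 /prob (esumID A setT) ?setTI; last by move=> t _; rewrite lee_fin.
by rewrite leeDl //; apply: esum_ge0 => t _; rewrite lee_fin.
Qed.

Lemma sum_nth (T : Type) (x0 : T) (S : seq T) (P : pred T) (G : T -> R) :
  \sum_(j < size S | P (nth x0 S j)) G (nth x0 S j) = \sum_(f <- S | P f) G f.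
Proof. by rewrite (big_nth x0) big_mkord. Qed.

Lemma expR2_ge4 : 4 <= expR (2 : R).
Proof.
have -> : (2 : R) = 1 + 1 by [].
rewrite expRD; have h := expR_ge1Dx (1 : R).
have h0 : 0 <= 1 + (1:R) by lra.
by have := ler_pM h0 h0 h h; rewrite (_ : (1 + 1) * (1 + 1) = (4 : R)) //; lra.
Qed.

Lemma K2 (X : Type) (F : set (X -> bool)) (eps : R) (N : R) : 1 <= N ->
  (Nfrac F eps < N%:E)%E ->
  exists HH, prob_rep F eps HH /\ (rep_size HH <= (ln (9/4 * N + 1))%:E)%E.
Proof.
move=> N1 /ereal_inf_lt [_ [p [dp1 dpF] <-] hp].
have N0 : 0 < N by lra.
have ballp : forall (nu : {classic X} -> R) fs, is_dist nu -> F fs ->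
    ((1/N)%:E < prob p [set f | (disagree nu f fs <= eps%:E)%E])%E.
  move=> nu fs dnu Ffs.
  have h : (einv (prob p [set f | (disagree nu f fs <= eps%:E)%E]) < N%:E)%E.
    by apply: le_lt_trans hp; apply: ereal_sup_ubound; exists nu, fs.
  move: h (prob_ge0 [set f | (disagree nu f fs <= eps%:E)%E] dp1).
  case: (prob p _) => [r| |] //= h r0; last exact: ltry.
  move: h; rewrite /einv; case: eqP => [_|/eqP rn0]; first by rewrite ltNge leey.
  rewrite !lte_fin; rewrite lee_fin in r0; move=> h.
  have rpos : 0 < r by rewrite lt_neqAle eq_sym rn0.
  by rewrite -[r]invrK -(invrK (1/N)) ltf_pV2 ?posrE ?invr_gt0 ?divr_gt0 // div1r invrK.
have eta0 : 0 < 1 / (10 * N) by rewrite divr_gt0 // mulr_gt0.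
have [S [uS posS ZS trS]] := trunc dp1 eta0.
pose Z := \sum_(f <- S) p f.
have Zpos : 1 - 1/(10 * N) <= Z.
  have := trS setT; rewrite (_ : prob p setT = 1%E); last by case: dp1.
  rewrite (eq_bigl xpredT); last by move=> f; rewrite in_setT.
  rewrite lee_fin /Z; lra.
have Z0 : 0 < Z.
  apply: lt_le_trans Zpos; rewrite subr_gt0 ltr_pdivrMr ?mulr_gt0 //; lra.
pose k := size S.
pose f0 : X -> bool := fun _ => true.
pose fS (j : 'I_k) := nth f0 S j.
have fSin : forall j, fS j \in S by move=> j; apply: mem_nth.
have pfS : forall j, 0 < p (fS j) by move=> j; exact: posS.
pose w' (j : 'I_k) := p (fS j) / Z.
have w'0 : forall j, 0 <= w' j by move=> j; rewrite divr_ge0 // ltW.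
have w'1 : \sum_j w' j = 1.
  by rewrite -mulr_suml (sum_nth f0 S xpredT p) divff // gt_eqF.
pose m := (Num.truncn (9/4 * N)).+1.
pose img (t : {ffun 'I_m -> 'I_k}) : set (X -> bool) := [set fS (t i) | i in [set: 'I_m]].
pose G (t : {ffun 'I_m -> 'I_k}) := \prod_i w' (t i).
have G0 : forall t, 0 <= G t by move=> t; apply: prodr_ge0 => i _.
have G1 : \sum_(t <- enum {ffun 'I_m -> 'I_k}) G t = 1.
  rewrite big_enum /= -(bigA_distr_bigA (fun (i : 'I_m) j => w' j)) /=.
  by rewrite big1 // => i _; rewrite w'1.
pose HH := seqd (enum {ffun 'I_m -> 'I_k}) img G.
have dHH : is_dist HH by apply: is_dist_seqd.
have imgle : forall t, (img t #<= `I_m)%card.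
  by move=> t; rewrite (card_le_eqr card_II); exact: card_image_le.
exists HH; split; last first.
  apply: ge_ereal_sup => _ [n [H [HHpos Hn]] <-].
  have [t _ eH] := seqd_pos HHpos; rewrite -eH in Hn.
  have nle : (n <= m)%N.
    by rewrite -(card_fset_set Hn); apply: geq_card_fset_set.
  rewrite /lncard; case: eqP => [_|/eqP n0]; first exact: leNye.
  rewrite lee_fin; have npos : (0 < n)%N by rewrite lt0n.
  have hm : (m%:R : R) <= 9/4 * N + 1.
    have := truncn_itv (x := 9/4 * N) (ltac:(lra)).
    by rewrite /m -addn1 natrD => /andP[h _]; lra.
  rewrite ler_ln ?posrE ?ltr0n //; last by lra.
  by apply: le_trans hm; rewrite ler_nat.
split => //; split.
  move=> H /seqd_pos [t _ <-]; split.
    exact: finite_image finite_finset.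
  by move=> g [i _ <-]; apply: dpF; apply: posS; exact: fSin.
move=> nu fs dnu Ffs.
set Bs := [set g | (disagree nu g fs <= eps%:E)%E].
set Good := [set H : set (X -> bool) | _].
rewrite prob_seqd; last by move=> t _; exact: G0.
have hB := ballp nu fs dnu Ffs.
have hS := trS Bs.
set SB := \sum_(f <- S | f \in Bs) p f.
have SB0 : 0 <= SB by apply: sumr_ge0 => f _; exact: (proj1 dp1).
have hx : 9 / (10 * N) <= SB.
  have := lt_le_trans hB hS; rewrite lte_fin -/SB.
  have -> : 1 / (10 * N) = (1 / N) / 10 by field; lra.
  have -> : 9 / (10 * N) = (1 / N) * 9 / 10 by field; lra.
  lra.
pose y := \sum_j w' j * (fS j \notin Bs)%:R.
have e1 : y + \sum_j w' j * (fS j \in Bs)%:R = 1.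
  rewrite -big_split /= -[RHS]w'1; apply: eq_bigr => j _.
  by case: (fS j \in Bs); rewrite /= ?mulr0 ?mulr1 ?addr0 ?add0r.
have e2 : \sum_j w' j * (fS j \in Bs)%:R = SB / Z.
  rewrite /SB -(sum_nth f0 S (fun f => f \in Bs) p) mulr_suml [RHS]big_mkcond /=.
  by apply: eq_bigr => j _; rewrite /w' /fS; case: ifP => _; rewrite ?mulr1 ?mulr0 ?mul0r.
have ZS1 : Z <= 1 := ZS.
have e3 : SB <= SB / Z by rewrite ler_pdivlMr //; nra.
have y0 : 0 <= y by apply: sumr_ge0 => j _; rewrite mulr_ge0.
have hy : y <= 1 - 9 / (10 * N) by lra.
have hx1 : 9 / (10 * N) <= 1.
  rewrite ler_pdivrMr ?mulr_gt0 //; lra.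
have hym : y ^+ m <= 1 / 4.
  apply: (@le_trans _ _ ((1 - 9 / (10 * N)) ^+ m)).
    by apply: lerXn2r => //; rewrite nnegrE; lra.
  apply: (@le_trans _ _ (expR (- (9 / (10 * N))) ^+ m)).
    apply: lerXn2r; rewrite ?nnegrE ?expR_ge0 //; first lra.
    by have := expR_ge1Dx (- (9 / (10 * N))).
  rewrite -expRM_natr.
  have hm : 9/4 * N <= m%:R by rewrite /m ltW // truncnS_gt.
  have hxm : 2 <= 9 / (10 * N) * m%:R.
    have := ler_wpM2l (ltW (divr_gt0 (ltr0n _ 9) (mulr_gt0 (ltr0n _ 10) N0))) hm.
    have -> : 9 / (10 * N) * (9 / 4 * N) = 81 / 40 by field; lra.
    lra.
  apply: (@le_trans _ _ (expR (- 2))).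
    by rewrite ler_expR; lra.
  rewrite expRN -[X in _ <= X]invrK lef_pV2 ?posrE ?expR_gt0 //.
  by rewrite div1r invrK expR2_ge4.
have hbad : \sum_(t <- enum {ffun 'I_m -> 'I_k} | img t \notin Good) G t <= y ^+ m.
  apply: (@le_trans _ _ (\sum_(t <- enum {ffun 'I_m -> 'I_k}) \prod_i (w' (t i) * (fS (t i) \notin Bs)%:R))).
    rewrite [X in X <= _]big_mkcond /=; apply: ler_sum => t _.
    case: ifPn => nG; last by apply: prodr_ge0 => i _; rewrite mulr_ge0.
    rewrite /G le_eqVlt; apply/orP; left; apply/eqP; apply: eq_bigr => i _.
    suff -> : (fS (t i) \notin Bs) = true by rewrite mulr1.
    apply/negP => hin; move/negP: nG; apply; apply: mem_set.
    by exists (fS (t i)); [exists i | exact: set_mem hin].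
  rewrite big_enum /= -(bigA_distr_bigA (fun (i : 'I_m) j => w' j * (fS j \notin Bs)%:R)) /=.
  by rewrite prodr_const card_ord.
have hsplit : 1 = \sum_(t <- enum {ffun 'I_m -> 'I_k} | img t \in Good) G t +
   \sum_(t <- enum {ffun 'I_m -> 'I_k} | img t \notin Good) G t.
  by rewrite -G1 (bigID (fun t => img t \in Good)).
rewrite lee_fin; lra.
Qed.

Lemma dirac_dist (X : Type) (x0 : X) :
  is_dist (seqd [:: (x0 : {classic X})] id (fun _ => (1:R))).
Proof. by apply: is_dist_seqd => //; rewrite big_seq1. Qed.

Lemma Nfrac_ge1 (X : Type) (x0 : X) (F : set (X -> bool)) (eps : R) (f0 : X -> bool) :
  F f0 -> (1 <= Nfrac F eps)%E.
Proof.
move=> Ff0; apply: le_ereal_inf_tmp => _ [p [dp _] <-].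
set nu0 := seqd [:: (x0 : {classic X})] id (fun _ => (1:R)).
apply: (@le_trans _ _ (einv (prob p [set f | (disagree nu0 f f0 <= eps%:E)%E]))); last first.
  by apply: ereal_sup_ubound; exists nu0, f0; split => //; exact: dirac_dist.
have := prob_ge0 [set f | (disagree nu0 f f0 <= eps%:E)%E] dp.
have := prob_le1 [set f | (disagree nu0 f f0 <= eps%:E)%E] dp.
case: (prob p _) => [r| |] //=; rewrite !lee_fin => r1 r0.
rewrite /einv; case: eqP => [_|/eqP rn0]; first exact: leey.
rewrite lee_fin invf_ge1 //; by rewrite lt_neqAle eq_sym rn0.
Qed.

Lemma RDim_ge0 (X : Type) (x0 : X) (F : set (X -> bool)) (eps : R) (f0 : X -> bool) :
  F f0 -> (0 <= RDim F eps)%E.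
Proof.
move=> Ff0; apply: le_ereal_inf_tmp => _ [HH [dH [supH repH]] <-].
set nu0 := seqd [:: (x0 : {classic X})] id (fun _ => (1:R)).
have h := repH nu0 f0 (dirac_dist x0) Ff0.
set Good := [set H : set (X -> bool) | _] in h.
case: (pselect (exists H, Good H /\ 0 < HH H)) => [[H [[h0 Hh _] HHpos]]|hn]; last first.
  exfalso; move: h; rewrite /prob esum1; first by rewrite lee_fin; lra.
  move=> H GH; apply/eqP; rewrite eqe eq_le (proj1 dH) andbT leNgt.
  by apply/negP => hp; apply: hn; exists H.
have [[n Hn] _] := supH H HHpos.
have n0 : n != 0%N.
  apply/eqP => e; move: Hn; rewrite e II0 card_eq0 => /eqP e'.
  by rewrite e' in Hh.
apply: (@le_trans _ _ (lncard R n)); last first.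
  by apply: ereal_sup_ubound; exists n => //; exists H.
rewrite /lncard (negbTE n0) lee_fin ln_ge0 // ler1n lt0n //.
Qed.
End S.
Theorem proposition6p7 (R : realType) (X : Type) (x0 : X)
  (F : set (X -> bool)) (eps : R) :
  F !=set0 -> 0 <= eps <= 1 ->
  ((RDim F eps = +oo)%E /\ (Nfrac F eps = +oo)%E) \/
  [/\ RDim F eps \is a fin_num, Nfrac F eps \is a fin_num &
      (`| RDim F eps - lnE (Nfrac F eps) | <= 2%:E)%E].
Proof.
move=> [f0 Ff0] _.
have A0 := RDim_ge0 x0 eps Ff0.
have B1 := Nfrac_ge1 x0 eps Ff0.
have Bfin_of : forall b : R, Nfrac F eps = b%:E -> 1 <= b ->
    exists a, RDim F eps = a%:E /\ a <= ln (9/4 * (11/10 * b) + 1).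
  move=> b eb b1.
  have [HH [rep hs]] : exists HH, prob_rep F eps HH /\
      (rep_size HH <= (ln (9/4 * (11/10 * b) + 1))%:E)%E.
    by apply: K2; [lra | rewrite eb lte_fin; lra].
  have hA : (RDim F eps <= (ln (9/4 * (11/10 * b) + 1))%:E)%E.
    by apply: le_trans hs; apply: ereal_inf_lbound; exists HH.
  move: A0 hA; case: (RDim F eps) => [a| |] //=; rewrite ?lee_fin => a0 ha.
  by exists a.
case: (boolP (RDim F eps == +oo%E)) => [/eqP Ainf|Afin].
  left; split => //.
  move: B1; case E: (Nfrac F eps) => [b| |] //=; rewrite ?lee_fin => b1.
  by have [a [ea _]] := Bfin_of b E b1; rewrite ea in Ainf.
right.
move: A0 Afin; case EA: (RDim F eps) => [a| |] //=; rewrite ?lee_fin => a0 _.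
have [_ [HH rep <-] hs] : (exists2 y, [set rep_size HH | HH in prob_rep F eps] y & (y < (a + 1)%:E)%E).
  by apply: ereal_inf_lt; rewrite -/(RDim F eps) EA lte_fin; lra.
have hB := K1 x0 Ff0 rep (ltW hs).
move: B1 hB; case EB: (Nfrac F eps) => [b| |] //=; rewrite ?lee_fin => b1 hb.
have [a' [ea' ha]] := Bfin_of b EB b1.
move: ea'; rewrite EA => -[ea']; rewrite -ea' in ha.
split => //.
rewrite ler_norml.
have bpos : 0 < b by lra.
have e2 := expR2_ge4 R.
have l1 : ln (9/4 * (11/10 * b) + 1) <= 2 + ln b.
  rewrite -[in X in _ <= X](expRK 2) -lnM ?posrE ?expR_gt0 //.
  rewrite ler_ln ?posrE ?mulr_gt0 ?expR_gt0 //; last by lra.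
  have : 4 * b <= expR 2 * b by rewrite ler_pM2r.
  lra.
have l2 : ln b <= a + 2.
  have h2 : ln b <= ln (2 * expR (a + 1)).
    by rewrite ler_ln ?posrE ?mulr_gt0 ?expR_gt0.
  move: h2; rewrite lnM ?posrE ?expR_gt0 // expRK.
  have : ln 2 <= (1:R).
    rewrite -[X in _ <= X](expRK 1) ler_ln ?posrE ?expR_gt0 //.
    by have := expR_ge1Dx (1:R); lra.
  lra.
apply/andP; split; lra.
Qed.
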